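(* Let $A\in\mathbb{R}^{n\times n}$ and $C\in\mathbb{R}^{p\times n}$ with $C\neq 0$ and $\operatorname{rank} C = p$. Then there exist real matrices $L\in\mathbb{R}^{n\times p}$ and $F\in\mathbb{R}^{n\times p}$ such that the $(n+p)\times(n+p)$ real matrix $$\begin{bmatrix} A - LC & F \\ -C & I_p \end{bmatrix}$$ is Schur stable if and only if the pair $(A,C)$ is detectable.
   Context: A real square matrix is Schur stable if all of its eigenvalues $\lambda\in\mathbb{C}$ satisfy $|\lambda|<1$. The pair $(A,C)$ is detectable if there exists $K\in\mathbb{R}^{n\times p}$ such that $A+KC$ is Schur stable (equivalently, $\operatorname{rank}\begin{bmatrix} C \\ zI_n - A\end{bmatrix} = n$ for every $z\in\mathbb{C}$ with $|z|\ge 1$). Motivation: for the discrete-time system $x(k+1)=Ax(k)+Bu(k)$, $y(k)=Cx(k)$, the system $\hat x(k+1)=(A-LC)\hat x(k)+Ly(k)+Bu(k)+Fv(k)$, $v(k+1)=v(k)+y(k)-C\hat x(k)$ is called a full-order proportional-integral observer exactly when the displayed matrix is Schur stable. *)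

(* Defs.v *)
From HB Require Import structures.
From mathcomp Require Import all_boot all_order all_algebra.
From mathcomp Require Import complex.
From mathcomp Require Import reals.
Set Implicit Arguments. Unset Strict Implicit. Unset Printing Implicit Defensive.
Import Order.TTheory GRing.Theory Num.Theory.
Local Open Scope ring_scope.
Local Open Scope complex_scope.

Definition schur_stable (R : realType) (n : nat) (M : 'M[R]_n) : Prop :=
  forall z : R[i], eigenvalue (map_mx (fun x : R => x%:C) M) z -> `|z| < 1.

Definition detectable (R : realType) (n p : nat)
    (A : 'M[R]_n) (C : 'M[R]_(p, n)) : Prop :=
  exists K : 'M[R]_(n, p), schur_stable (A + K *m C).

Definition pi_obs_mx (R : realType) (n p : nat)
    (A : 'M[R]_n) (C : 'M[R]_(p, n)) (L F : 'M[R]_(n, p)) : 'M[R]_(n + p) :=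
  block_mx (A - L *m C) F (- C) 1%:M.

(* Main.v *)
Require Import Defs.
From HB Require Import structures.
From mathcomp Require Import all_boot all_order all_algebra.
From mathcomp Require Import complex reals ring.
Import GRing.Theory Num.Theory.
Local Open Scope ring_scope.
Section Gen.
Variable K : fieldType.

Lemma eig_unit n (g : 'M[K]_n) a : eigenvalue g a = ((g - a%:M) \notin unitmx).
Proof. by rewrite /eigenvalue /eigenspace kermx_eq0 row_free_unit. Qed.

Lemma eig_tr n (g : 'M[K]_n) a : eigenvalue g^T a = eigenvalue g a.
Proof.
by rewrite !eig_unit -unitmx_tr linearB /= tr_scalar_mx trmxK.
Qed.

Lemma eig_sim n (X Y P : 'M[K]_n) a : X *m P = P *m Y -> P \in unitmx ->
  eigenvalue X a -> eigenvalue Y a.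
Proof.
move=> XP uP /eigenvalueP [v vX v0]; apply/eigenvalueP; exists (v *m P).
  by rewrite -mulmxA -XP mulmxA vX scalemxAl.
by rewrite mulmx_free_eq0 ?row_free_unit.
Qed.

Lemma eig_lblock n1 n2 (X : 'M[K]_n1) (Y : 'M[K]_(n2, n1)) (W : 'M[K]_n2) a :
  eigenvalue (block_mx X 0 Y W) a -> eigenvalue X a \/ eigenvalue W a.
Proof.
move=> /eigenvalueP [v]; rewrite -[v]hsubmxK mul_row_block !mulmx0 add0r.
rewrite scale_row_mx => /eq_row_mx [e1 e2] v0.
have [b0|bn0] := eqVneq (rsubmx v) 0.
  left; apply/eigenvalueP; exists (lsubmx v).
    by move: e1; rewrite b0 mul0mx addr0.
  by apply: contraNneq v0 => a0; rewrite a0 b0 row_mx0.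
by right; apply/eigenvalueP; exists (rsubmx v).
Qed.

Lemma eig0 n a : eigenvalue (0 : 'M[K]_n) a -> a = 0.
Proof.
move=> /eigenvalueP [v]; rewrite mulmx0 => /esym /eqP.
by rewrite scaler_eq0 => /orP [/eqP ->|/eqP->]; rewrite ?eqxx.
Qed.
End Gen.

Section Real.
Variable R : realType.
Local Notation cm M := (map_mx (real_complex R) M).

Lemma stabE n (M : 'M[R]_n) :
  schur_stable M <-> forall z, eigenvalue (cm M) z -> `|z| < 1.
Proof. by []. Qed.

Lemma sim_stable n (X Y P : 'M[R]_n) : X *m P = P *m Y -> P \in unitmx ->
  schur_stable Y -> schur_stable X.
Proof.
move=> XP uP /stabE sY; apply/stabE => z ez; apply: sY.
apply: (@eig_sim _ _ _ _ (cm P)) ez; first by rewrite -!map_mxM XP.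
by rewrite map_unitmx.
Qed.

Lemma stable_tr n (M : 'M[R]_n) : schur_stable M^T <-> schur_stable M.
Proof.
by split=> /stabE S; apply/stabE => z; move: (S z); rewrite -map_trmx eig_tr.
Qed.

Lemma lblock_stable n1 n2 (X : 'M[R]_n1) (Y : 'M[R]_(n2, n1)) (W : 'M[R]_n2) :
  schur_stable X -> schur_stable W -> schur_stable (block_mx X 0 Y W).
Proof.
move=> /stabE sX /stabE sW; apply/stabE => z.
rewrite map_block_mx map_mx0 => /eig_lblock [/sX|/sW] //.
Qed.

Lemma zero_stable n : schur_stable (0 : 'M[R]_n).
Proof. by apply/stabE => z; rewrite map_mx0 => /eig0 ->; rewrite normr0 ltr01. Qed.

End Real.

Lemma rev_dir (R : realType) n p (A : 'M[R]_n) (C : 'M[R]_(p, n)) :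
  \rank C = p -> detectable A C -> exists L F, schur_stable (pi_obs_mx A C L F).
Proof.
move=> rC [K sK].
have /row_freeP [X CX] : row_free C by rewrite /row_free rC.
exists (X - K), (X - (A + K *m C) *m X).
set M := pi_obs_mx _ _ _ _.
apply: (@sim_stable _ _ M (block_mx (A + K *m C) 0 (- C) 0) (block_mx 1%:M X 0 1%:M)).
- rewrite /M /pi_obs_mx !mulmx_block.
  rewrite !mulmx1 !mul1mx !mulmx0 !mul0mx !addr0 !add0r.
  rewrite mulNmx CX.
  congr block_mx.
  + by rewrite mulmxBl mulmxN opprB addrA.
  + rewrite !mulmxBl !mulmxDl -!mulmxA CX mulmx1 opprB opprD.
    by rewrite mulmx1; apply/matrixP => i j; rewrite !mxE; ring.
  + by rewrite addNr.
- by rewrite unitmxE det_ublock !det1 mulr1 unitr1.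
- by apply: lblock_stable => //; apply: zero_stable.
Qed.
Set Implicit Arguments. Unset Strict Implicit.
Section PBH.
Variable R : realType.
Local Notation cm M := (map_mx (real_complex R) M).

Definition pbh n m (A : 'M[R]_n) (B : 'M[R]_(n, m)) :=
  forall (z : R[i]) (v : 'rV[R[i]]_n), ~ (`|z| < 1) ->
    v *m cm A = z *: v -> v *m cm B = 0 -> v = 0.

Definition stabz n m (A : 'M[R]_n) (B : 'M[R]_(n, m)) :=
  exists F : 'M[R]_(m, n), schur_stable (A + B *m F).

Lemma delta11 : delta_mx 0 0 = 1%:M :> 'M[R]_1.
Proof. by apply/matrixP => i k; rewrite !ord1 !mxE. Qed.

Lemma step n' m (A : 'M[R]_(1 + n')) (B : 'M[R]_(1 + n', m)) (j : 'I_m) :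
  B *m delta_mx j 0 = col_mx 1%:M 0 ->
  (forall m (A' : 'M[R]_n') (B' : 'M[R]_(n', m)), pbh A' B' -> stabz A' B') ->
  pbh A B -> stabz A B.
Proof.
move=> hB IH hP.
set a21 := dlsubmx A; set A22 := drsubmx A; set B2 := dsubmx B.
set dl := delta_mx 0 j : 'M[R]_(1, m).
set B' := B2 + a21 *m dl.
have hB2 : B2 *m (delta_mx j 0 : 'M_(m,1)) = 0 by rewrite /B2 mul_dsub_mx hB col_mxKd.
have hB'e : B' *m (delta_mx j 0 : 'M_(m,1)) = a21.
  by rewrite /B' mulmxDl hB2 add0r -mulmxA /dl mul_delta_mx delta11 mulmx1.
have hP' : pbh A22 B'.
  move=> z v nz vA vB.
  have va : v *m cm a21 = 0.
    by rewrite -hB'e map_mxM mulmxA vB mul0mx.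
  have vb : v *m cm B2 = 0.
    by move: vB; rewrite /B' map_mxD map_mxM mulmxDr mulmxA va mul0mx addr0.
  have := hP z (row_mx 0 v) nz.
  rewrite -[A]submxK map_block_mx mul_row_block !mul0mx !add0r -/a21 -/A22 va vA.
  rewrite -[B]vsubmxK map_col_mx mul_row_col mul0mx add0r -/B2 vb.
  rewrite scale_row_mx scaler0 => /(_ erefl erefl) /eqP.
  by rewrite -row_mx0 => /eqP /eq_row_mx [_ ->].
have [G sG] := IH _ _ _ hP'.
set g := dl *m G.
set V := A22 + B' *m G.
set Y := block_mx (0 : 'M[R]_1) 0 a21 V.
set P := block_mx (1%:M : 'M[R]_1) g 0 1%:M.
set Q := block_mx (1%:M : 'M[R]_1) (- g) 0 1%:M.
set Z := P *m Y *m Q.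
set W := A + B *m row_mx 0 G.
exists (row_mx 0 G + delta_mx j 0 *m (usubmx Z - usubmx W)).
have QP : Q *m P = 1%:M.
  by rewrite /Q /P mulmx_block !mulmx1 !mul1mx !mulmx0 !addr0 addrN mul0mx add0r scalar_mx_block.
have ZE : A + B *m (row_mx 0 G + delta_mx j 0 *m (usubmx Z - usubmx W)) = Z.
  rewrite (mulmxDr B).
  rewrite mulmxA hB mul_col_mx mul1mx.
  rewrite [X in col_mx _ X]mul0mx addrA -/W.
  have dZ : dsubmx Z = dsubmx W.
    rewrite /Z /P /Y /Q !mulmx_block ?mulmx0 ?mul0mx ?mulmx1 ?mul1mx ?addr0 ?add0r ?mulmx0 ?mul0mx ?addr0 ?add0r.
    rewrite block_mxEv col_mxKd /W -[A]vsubmxK -[B]vsubmxK mul_col_mx add_col_mx col_mxKd.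
    rewrite mul_mx_row mulmx0 -[dsubmx A]hsubmxK add_row_mx addr0 -/B2.
    congr row_mx.
    rewrite /V /B' mulmxN mulmxDl -mulmxA -/g.
    by rewrite addrCA (addrC (B2 *m G)) addKr.
  by rewrite -{1}(vsubmxK W) add_col_mx addr0 -[RHS]vsubmxK dZ addrC subrK.
rewrite ZE.
apply: (@sim_stable _ _ Z Y P).
- by rewrite /Z -!mulmxA QP mulmx1.
- by rewrite unitmxE det_ublock !det1 mulr1 unitr1.
- by apply: lblock_stable => //; apply: zero_stable.
Qed.


Lemma pbh_tr n m (A : 'M[R]_n) (B : 'M[R]_(n, m)) T U :
  T \in unitmx -> U \in unitmx -> pbh A B -> pbh (T *m A *m invmx T) (T *m B *m U).
Proof.
move=> uT uU hP z v nz vA vB.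
have fT : row_free (cm T) by rewrite row_free_unit map_unitmx.
have fU : row_free (cm U) by rewrite row_free_unit map_unitmx.
apply/eqP; rewrite -(mulmx_free_eq0 _ fT); apply/eqP; apply: hP nz _ _.
- have e : T *m A *m invmx T *m T = T *m A by rewrite mulmxKV.
  by rewrite -mulmxA -map_mxM -e map_mxM mulmxA vA scalemxAl.
- apply/eqP; rewrite -(mulmx_free_eq0 _ fU) -!mulmxA -!map_mxM.
  by move: vB; rewrite !map_mxM !mulmxA => ->.
Qed.

Lemma stabz_tr n m (A : 'M[R]_n) (B : 'M[R]_(n, m)) T U :
  T \in unitmx -> U \in unitmx -> stabz (T *m A *m invmx T) (T *m B *m U) -> stabz A B.
Proof.
move=> uT uU [F sF]; exists (U *m F *m T).
apply: (@sim_stable _ _ _ _ (invmx T)) sF; last by rewrite unitmx_inv.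
by rewrite mulmxDl mulmxDr !mulmxA mulVmx // !mul1mx mulmxK.
Qed.

Lemma pid_col0 n m r : (0 < r)%N ->
  pid_mx r *m (delta_mx 0 0 : 'M[R]_(m.+1, 1)) = col_mx (1%:M : 'M[R]_1) (0 : 'M[R]_(n, 1)).
Proof.
move=> r0; rewrite -colE; apply/matrixP => i k; rewrite !ord1.
rewrite -(splitK i); case: (split i) => i' /=.
  by rewrite col_mxEu !mxE !ord1 /= r0.
by rewrite col_mxEd !mxE.
Qed.

Lemma pbh_stabz n : forall m (A : 'M[R]_n) (B : 'M[R]_(n, m)), pbh A B -> stabz A B.
Proof.
elim: n => [|n IH] m A B hP.
  exists 0; apply/stabE => z /eigenvalueP [v _].
  by rewrite (thinmx0 v) eqxx.
case: (eqVneq B 0) => [B0|Bn0].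
  exists 0; rewrite mulmx0 addr0; apply/stabE => z /eigenvalueP [v vA vn0].
  case: (boolP (`|z| < 1)) => // /negP nz.
  by move: vn0; rewrite (hP z v nz vA) ?eqxx // B0 map_mx0 mulmx0.
case: m B hP Bn0 => [|m] B hP Bn0.
  by move: Bn0; rewrite (thinmx0 B) eqxx.
set T := invmx (col_ebase B); set U := invmx (row_ebase B).
have uT : T \in unitmx by rewrite unitmx_inv col_ebase_unit.
have uU : U \in unitmx by rewrite unitmx_inv row_ebase_unit.
have eB : T *m B *m U = pid_mx (\rank B).
  rewrite -{1}(mulmx_ebase B) /T /U !mulmxA mulVmx ?col_ebase_unit // mul1mx.
  by rewrite mulmxK ?row_ebase_unit.
apply: (stabz_tr uT uU).
apply: (@step n _ (T *m A *m invmx T) (T *m B *m U) ord0).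
- rewrite eB; apply: pid_col0; by rewrite lt0n mxrank_eq0.
- exact: IH.
- exact: pbh_tr.
Qed.

End PBH.
Theorem theorem1 (R : realType) (n p : nat)
    (A : 'M[R]_n) (C : 'M[R]_(p, n)) :
  C != 0 -> \rank C = p ->
  (exists L F : 'M[R]_(n, p), schur_stable (pi_obs_mx A C L F)) <->
  detectable A C.
Proof.
move=> _ rC; split; last exact: rev_dir.
move=> [L [F sM]].
have hP : pbh A^T C^T.
  move=> z v nz vA vC.
  have sT := iffRL (@stable_tr R (n + p) (pi_obs_mx A C L F)) sM.
  have := proj1 (@stabE R (n + p) _) sT z.
  case: (eqVneq v 0) => // vn0 H; exfalso; apply: nz; apply: H.
  apply/eigenvalueP; exists (row_mx v (0 : 'rV_p)).
    rewrite /pi_obs_mx tr_block_mx map_block_mx mul_row_block.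
    rewrite !mul0mx !addr0 [(A - L *m C)^T]raddfB /= trmx_mul [(- C)^T]raddfN /=.
    rewrite map_mxB map_mxN map_mxM mulmxBr mulmxA mulmxN vA vC mul0mx subr0 oppr0.
    by rewrite scale_row_mx scaler0.
  by apply: contra vn0 => /eqP; rewrite -row_mx0 => /eq_row_mx [-> _].
have [F' sF] := pbh_stabz hP.
exists F'^T; have h := iffLR (@stable_tr R n (A + F'^T *m C)). apply: h.
have -> : (A + F'^T *m C)^T = A^T + C^T *m F' by rewrite raddfD /= trmx_mul trmxK.
exact: sF.
Qed.
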